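(* For DPP-TS-alt, for every round $t$ and every $b\in[3,B]$, $$\mathbb{E}\big[\sigma_{t,b}(x_{t,b})\big]\le \mathbb{E}\big[\sigma_{t,b-1}(x_{t,b-1})\big].$$
   Context: Setting: $f\sim GP(0,k)$ on a domain $\mathcal{X}$. Fix batch size $B\ge 3$ and horizon $T$. In each round $t$ an algorithm selects $x_{t,1},\dots,x_{t,B}\in\mathcal{X}$ before receiving feedback from round $t$, then observes $y_{t,b}=f(x_{t,b})+\epsilon_{t,b}$, $\epsilon_{t,b}$ i.i.d. $\mathcal N(0,\sigma^2)$ independent of $f$. Index pairs $(t,b)$ are ordered lexicographically; $D_{t,b}$ is the set of pairs $(x_{t',b'},y_{t',b'})$ with $(t',b')\le (t,b)$; $D_{t,0}:=D_{t-1,B}$, $D_{0,B}:=\emptyset$. $\sigma^2_{t,b}(x)$ is the GP posterior variance of $f(x)$ given $D_{t,b-1}$ (depending only on observed locations). $p_{\max,t}$ is the law of $\arg\max_x\tilde f(x)$ with $\tilde f$ drawn from the posterior of $f$ given $D_{t-1,B}$. DPP-TS-alt: in round $t$, $x_{t,1}\sim p_{\max,t}$; then $(x_{t,2},\dots,x_{t,B})$ are drawn jointly from the distribution on $\mathcal{X}^{B-1}$ with density, with respect to $p_{\max,t}^{\otimes(B-1)}$, proportional to $\det(I+\sigma^{-2}K^{(t)}_X)$, where $X=(x_{t,2},\dots,x_{t,B})$ and $K^{(t)}_X$ is the matrix of the GP posterior covariance of $f$ given $D_{t-1,B}$ together with an observation at $x_{t,1}$, evaluated at the points of $X$. *)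

(* Defs.v *)
From HB Require Import structures.
From mathcomp Require Import all_boot all_order all_algebra.
From mathcomp Require Import all_classical all_reals all_analysis.
Set Implicit Arguments. Unset Strict Implicit. Unset Printing Implicit Defensive.
Import Order.TTheory GRing.Theory Num.Theory.
Local Open Scope ring_scope.

Section GPDefs.
Context {R : realType} {d : measure_display} {X : measurableType d}.

Definition gram (k : X -> X -> R) (s : seq X) : 'M[R]_(size s) :=
  \matrix_(i, j) k (tnth (in_tuple s) i) (tnth (in_tuple s) j).

Definition kvec (k : X -> X -> R) (s : seq X) (x : X) : 'cV[R]_(size s) :=
  \col_i k (tnth (in_tuple s) i) x.

(* GP posterior covariance of f(x), f(y) given noisy observations
   (noise variance s2) at the locations s. *)
Definition post_cov (s2 : R) (k : X -> X -> R) (s : seq X) (x y : X) : R :=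
  k x y - ((kvec k s x)^T *m invmx (gram k s + s2%:M) *m kvec k s y) 0 0.

Definition post_sd (s2 : R) (k : X -> X -> R) (s : seq X) (x : X) : R :=
  Num.sqrt (post_cov s2 k s x x).

Definition dpp_weight (s2 : R) (k : X -> X -> R) (S : seq X) (x1 : X)
    (xs : seq X) : R :=
  \det (1%:M + s2^-1 *: \matrix_(i, j)
      post_cov s2 k (rcons S x1) (tnth (in_tuple xs) i) (tnth (in_tuple xs) j)).

Local Open Scope ereal_scope.

(* iterated integral w.r.t. p^{(x) n} of F over lists of length n *)
Fixpoint iint (p : {measure set X -> \bar R}) (n : nat)
    (F : seq X -> \bar R) {struct n} : \bar R :=
  match n with
  | 0 => F [::]
  | n'.+1 => \int[p]_x iint p n' (fun s => F (x :: s))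
  end.

(* Expectation of g(x_{t,1}, (x_{t,2},...,x_{t,B})) under one round of
   DPP-TS-alt, conditionally on D_{t-1,B} (locations S), when
   p = p_{max,t}: x1 ~ p, then (x2..xB) has density proportional to
   dpp_weight w.r.t. p^{(x)(B-1)}. *)
Definition round_exp (p : probability X R) (s2 : R) (k : X -> X -> R)
    (B : nat) (S : seq X) (g : X -> seq X -> R) : \bar R :=
  \int[p]_x1
    (iint p B.-1 (fun xs => (dpp_weight s2 k S x1 xs * g x1 xs)%:E) *
     ((fine (iint p B.-1 (fun xs => (dpp_weight s2 k S x1 xs)%:E)))^-1)%:E).

End GPDefs.

(* sigma_{t,b}(x_{t,b}) as a function of x_{t,1} and (x_{t,2},...,x_{t,B}):
   posterior sd given D_{t,b-1}, i.e. S ++ (x_{t,1},...,x_{t,b-1}). *)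
Definition sd_tb {R : realType} {d : measure_display} {X : measurableType d}
    (s2 : R) (k : X -> X -> R) (S : seq X) (b : nat) (x1 : X) (xs : seq X) : R :=
  post_sd s2 k (S ++ take b.-1 (x1 :: xs)) (nth x1 (x1 :: xs) b.-1).

(* Main.v *)
Require Import Defs.
From HB Require Import structures.
From mathcomp Require Import all_boot all_order all_algebra.
From mathcomp Require Import all_classical all_reals all_analysis.
From mathcomp Require Import measurable_realfun.
From mathcomp Require Import ring lra.
From mathcomp Require Import fingroup perm.
From mathcomp Require Import zify.
Import Order.TTheory GRing.Theory Num.Theory.
Local Open Scope classical_set_scope.
Local Open Scope ring_scope.

Section LE.
Local Open Scope ereal_scope.


Lemma le_int_nn (R : realType) d (T : measurableType d)
  (mu : {measure set T -> \bar R}) (f g : T -> \bar R) :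
  (forall x, 0 <= f x) -> (forall x, f x <= g x) ->
  \int[mu]_x f x <= \int[mu]_x g x.
Proof.
move=> f0 fg; have g0 x : 0 <= g x by exact: le_trans (f0 x) (fg x).
rewrite !ge0_integralTE //; apply: ereal_sup_le => _ [h /= hf <-].
by exists h => //= x; exact: le_trans (hf x) (fg x).
Qed.

End LE.
Section MEAS.
Context {R : realType} {d' : measure_display} {Y : measurableType d'}.

Lemma meas_invR : measurable_fun [set: R] (@GRing.inv R).
Proof.
have -> : [set: R] = [set x : R | x != 0] `|` [set 0].
  by apply/seteqP; split => x //= _; case: (eqVneq x 0) => [->|h]; [right|left].
apply/measurable_funU => //.
- apply: open_measurable; exact: open_neq.
- split; last exact: measurable_fun_set1.
  apply: open_continuous_measurable_fun; first exact: open_neq.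
  by move=> x /set_mem /= x0; apply: inv_continuous.
Qed.

Lemma meas_inv (f : Y -> R) : measurable_fun setT f ->
  measurable_fun setT (fun y => (f y)^-1).
Proof. by move=> mf; exact: (measurableT_comp meas_invR mf). Qed.

Lemma meas_sqrt (f : Y -> R) : measurable_fun setT f ->
  measurable_fun setT (fun y => Num.sqrt (f y)).
Proof.
move=> mf; apply: (measurableT_comp _ mf).
apply: continuous_measurable_fun; exact: sqrt_continuous.
Qed.

Definition mmx {m n} (M : Y -> 'M[R]_(m, n)) :=
  forall i j, measurable_fun setT (fun y => M y i j).

Lemma mmx_fun {m n} (F : Y -> 'I_m -> 'I_n -> R) :
  (forall i j, measurable_fun setT (fun y => F y i j)) ->
  mmx (fun y => \matrix_(i, j) F y i j).
Proof. by move=> h i j; under eq_fun do rewrite mxE; exact: h. Qed.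

Lemma mmx_cst {m n} (A : 'M[R]_(m, n)) : mmx (fun _ => A).
Proof. by move=> i j; exact: measurable_cst. Qed.

Lemma mmx_add {m n} (M N : Y -> 'M[R]_(m, n)) : mmx M -> mmx N ->
  mmx (fun y => M y + N y).
Proof.
move=> hM hN i j; under eq_fun do rewrite mxE.
exact: measurable_funD.
Qed.

Lemma mmx_opp {m n} (M : Y -> 'M[R]_(m, n)) : mmx M -> mmx (fun y => - M y).
Proof.
move=> hM i j; under eq_fun do rewrite mxE.
exact: measurable_funN.
Qed.

Lemma mmx_scale {m n} (a : R) (M : Y -> 'M[R]_(m, n)) : mmx M ->
  mmx (fun y => a *: M y).
Proof.
move=> hM i j; under eq_fun do rewrite mxE.
exact: measurable_funM (measurable_cst _) (hM i j).
Qed.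

Lemma mmx_tr {m n} (M : Y -> 'M[R]_(m, n)) : mmx M -> mmx (fun y => (M y)^T).
Proof. by move=> hM i j; under eq_fun do rewrite mxE; exact: hM. Qed.

Lemma mmx_mul {m n o} (M : Y -> 'M[R]_(m, n)) (N : Y -> 'M[R]_(n, o)) :
  mmx M -> mmx N -> mmx (fun y => M y *m N y).
Proof.
move=> hM hN i j; under eq_fun do rewrite mxE.
apply: measurable_sum => l.
exact: measurable_funM.
Qed.

Lemma meas_det {n} (M : Y -> 'M[R]_n) : mmx M ->
  measurable_fun setT (fun y => \det (M y)).
Proof.
move=> hM; rewrite /determinant; apply: measurable_sum => s.
apply: measurable_funM; first exact: measurable_cst.
by apply: measurable_prod => i _; exact: hM.
Qed.

Lemma mmx_adj {n} (M : Y -> 'M[R]_n) : mmx M -> mmx (fun y => \adj (M y)).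
Proof.
move=> hM i j; under eq_fun do rewrite mxE /cofactor.
apply: measurable_funM; first exact: measurable_cst.
apply: meas_det => a b; under eq_fun do rewrite !mxE.
exact: hM.
Qed.

Lemma mmx_inv {n} (M : Y -> 'M[R]_n) : mmx M -> mmx (fun y => invmx (M y)).
Proof.
move=> hM i j.
have -> : (fun y => invmx (M y) i j) = (fun y =>
   if \det (M y) == 0 then M y i j else (\det (M y))^-1 * \adj (M y) i j).
  apply/funext => y; rewrite /invmx unitmxE unitfE.
  by case: eqP => _ //=; rewrite mxE.
apply: measurable_fun_ifT; last 2 first.
- exact: hM.
- apply: measurable_funM; [apply: meas_inv; exact: meas_det|exact: mmx_adj].
apply: measurable_fun_eqr; [exact: meas_det|exact: measurable_cst].
Qed.

End MEAS.

Section LA.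
Context {R : realType}.

Lemma sumsq_ge0 n (c : 'cV[R]_n) : 0 <= (c^T *m c) 0 0.
Proof.
rewrite mxE; apply: sumr_ge0 => i _; rewrite mxE -expr2; exact: sqr_ge0.
Qed.

Lemma sumsq_gt0 n (c : 'cV[R]_n) : c != 0 -> 0 < (c^T *m c) 0 0.
Proof.
move=> cn0; have [i ci] : exists i, c i 0 != 0.
  apply/existsP; apply: contraR cn0 => /existsPn h.
  apply/eqP/matrixP => a b; rewrite mxE (ord1 b); exact/eqP/negbNE/h.
rewrite mxE (bigD1 i) //= mxE -expr2.
apply: (@lt_le_trans _ _ (c i 0 ^+ 2)); first by rewrite lt_def sqr_ge0 andbT sqrf_eq0.
rewrite lerDl; apply: sumr_ge0 => j _; rewrite mxE -expr2; exact: sqr_ge0.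
Qed.

Lemma pd_unit n (A : 'M[R]_n) (e : R) : 0 < e ->
  (forall c : 'cV_n, e * (c^T *m c) 0 0 <= (c^T *m A *m c) 0 0) ->
  A \in unitmx.
Proof.
move=> e0 h; rewrite unitmxE unitfE; apply/negP => /det0P [v vn0 vA].
have := h v^T; rewrite trmxK vA mul0mx [X in _ <= X]mxE leNgt => /negP; apply.
have := @sumsq_gt0 _ v^T; rewrite trmxK => H.
apply: mulr_gt0 => //; apply: H.
by apply: contra vn0 => /eqP/(congr1 trmx); rewrite trmxK trmx0 => ->.
Qed.

Lemma trmx11 (A : 'M[R]_1) : A^T 0 0 = A 0 0.
Proof. by rewrite mxE. Qed.

Lemma mxE_add m n (A B : 'M[R]_(m, n)) i j : (A + B) i j = A i j + B i j.
Proof. by rewrite mxE. Qed.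
Lemma mxE_scale m n (a : R) (A : 'M[R]_(m, n)) i j : (a *: A) i j = a * A i j.
Proof. by rewrite mxE. Qed.
Lemma mxE_sub m n (A B : 'M[R]_(m, n)) i j : (A - B) i j = A i j - B i j.
Proof. by rewrite !mxE. Qed.
Lemma mxE_opp m n (A : 'M[R]_(m, n)) i j : (- A) i j = - A i j.
Proof. by rewrite mxE. Qed.
End LA.

Section DETP.
Context {R : realType}.

Lemma det_psd_ge0 m (N : 'M[R]_m) :
  (forall c : 'cV_m, 0 <= (c^T *m N *m c) 0 0) -> 0 <= \det (1%:M + N).
Proof.
move=> hN.
pose pM : 'M[{poly R}]_m :=
  \matrix_(i, j) (((1%:M : 'M[R]_m) i j)%:P + 'X * (N i j)%:P).
pose p := \det pM.
have pE t : p.[t] = \det (1%:M + t *: N).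
  rewrite -horner_evalE /p -det_map_mx; congr (\det _).
  by apply/matrixP => i j; rewrite !mxE /= horner_evalE !hornerE.
have nz t : 0 <= t -> \det (1%:M + t *: N) != 0.
  move=> t0; rewrite -unitfE -unitmxE; apply: (@pd_unit _ _ _ 1 ltr01) => c.
  rewrite mul1r mulmxDr mulmx1 mulmxDl mxE_add -scalemxAr -scalemxAl mxE_scale.
  by rewrite lerDl; apply: mulr_ge0 => //; exact: hN.
rewrite leNgt; apply/negP => hneg.
have [x /andP[x0 x1] rx] : exists2 x, 0 <= x <= 1 & root (- p) x.
  apply: poly_ivt; first exact: ler01.
  rewrite !hornerN !pE scale0r addr0 det1 scale1r oppr_le0 ler01 /=.
  by rewrite oppr_ge0 ltW.
by move: rx; rewrite rootN /root pE (negPf (nz _ x0)).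
Qed.

End DETP.
Section GLS.
Context {R : realType} {d : measure_display} {X : measurableType d}.

Definition GL (x0 : X) {d'} {Y : measurableType d'} (Q : Y -> seq X) (c : nat) :=
  (forall y, size (Q y) = c) /\
  (forall i, measurable_fun setT (fun y => nth x0 (Q y) i)).

Context {d' : measure_display} {Y : measurableType d'} (x0 : X).

Lemma GL_const (l : seq X) : GL x0 (fun _ : Y => l) (size l).
Proof. by split => // i; exact: measurable_cst. Qed.

Lemma GL_cat Q1 Q2 c1 c2 : GL x0 Q1 c1 -> GL x0 Q2 c2 ->
  GL x0 (fun y : Y => Q1 y ++ Q2 y) (c1 + c2).
Proof.
case=> s1 m1 [s2 m2]; split=> [y|i]; first by rewrite size_cat s1 s2.
have -> : (fun y => nth x0 (Q1 y ++ Q2 y) i) =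
   (fun y => if (i < c1)%N then nth x0 (Q1 y) i else nth x0 (Q2 y) (i - c1)).
  by apply/funext => y; rewrite nth_cat s1.
by case: (i < c1)%N.
Qed.

Lemma GL_take j Q c : GL x0 Q c -> GL x0 (fun y : Y => take j (Q y)) (minn j c).
Proof.
case=> s1 m1; split=> [y|i]; first by rewrite size_take_min s1.
case: (ltnP i j) => h.
  by under eq_fun do rewrite nth_take //; exact: m1.
under eq_fun do rewrite nth_default ?size_take_min ?(leq_trans (geq_minl _ _) h) //.
exact: measurable_cst.
Qed.

End GLS.

Section IINT.
Local Open Scope ereal_scope.
Context {R : realType} {d : measure_display} {X : measurableType d}.
Variable p : probability X R.

Lemma iint_ge0 n F : (forall s, 0 <= F s) -> 0 <= iint p n F.
Proof.
elim: n F => [|n IH] F F0 /=; first exact: F0.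
by apply: integral_ge0 => x _; apply: IH.
Qed.

Lemma iint_le n F G : (forall s, 0 <= F s) -> (forall s, F s <= G s) ->
  iint p n F <= iint p n G.
Proof.
elim: n F G => [|n IH] F G F0 FG /=; first exact: FG.
apply: le_int_nn => x; first by apply: iint_ge0.
by apply: IH.
Qed.

Lemma iint_prefix j m F G : (forall s, 0 <= F s) ->
  (forall pre, size pre = j ->
    iint p m (fun s => F (pre ++ s)) <= iint p m (fun s => G (pre ++ s))) ->
  iint p (j + m) F <= iint p (j + m) G.
Proof.
elim: j F G => [|j IH] F G F0 H /=; first exact: (H [::]).
apply: le_int_nn => x; first by apply: iint_ge0.
apply: (IH (fun s => F (x :: s)) (fun s => G (x :: s))) => // pre Hp.
by apply: (H (x :: pre)); rewrite /= Hp.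
Qed.

Lemma GL_rcons {x0 d'} {Y : measurableType d'} {Q c} : GL x0 Q c ->
  GL x0 (fun yx : Y * X => rcons (Q yx.1) yx.2) c.+1.
Proof.
case=> Hs Hm; split=> [y|i]; first by rewrite size_rcons Hs.
have -> : (fun y : Y * X => nth x0 (rcons (Q y.1) y.2) i) =
  (fun y => if (i < c)%N then nth x0 (Q y.1) i else if i == c then y.2 else x0).
  by apply/funext => y; rewrite nth_rcons Hs.
case: (i < c)%N; first exact: (measurableT_comp (Hm i) measurable_fst).
case: (i == c); [exact: measurable_snd | exact: measurable_cst].
Qed.

Lemma iint_meas x0 m : forall d' (Y : measurableType d') (Q : Y -> seq X) c
  (G : seq X -> \bar R), (forall s, 0 <= G s) -> GL x0 Q c ->
  (forall d'' (Y' : measurableType d'') (Q' : Y' -> seq X),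
     GL x0 Q' (c + m) -> measurable_fun setT (fun y => G (Q' y))) ->
  measurable_fun setT (fun y => iint p m (fun s => G (Q y ++ s))).
Proof.
elim: m => [|m IH] d' Y Q c G G0 HQ HG /=.
  under eq_fun do rewrite cats0.
  by apply: HG; rewrite addn0.
pose f := fun yx : Y * X => iint p m (fun s => G (rcons (Q yx.1) yx.2 ++ s)).
have mf : measurable_fun setT f.
  apply: (IH _ _ _ c.+1 G G0 (GL_rcons HQ)) => d'' Y' Q' HQ'.
  by apply: HG; rewrite addnS -addSn.
have f0 yx : 0 <= f yx by apply: iint_ge0.
have := @measurable_fun_fubini_tonelli_F _ _ Y X R p f mf f0.
rewrite /fubini_F /f; congr measurable_fun; apply/funext => y /=.
apply: eq_integral => x _; congr iint; apply/funext => s.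
by rewrite -cats1 -catA.
Qed.

Lemma GL_pair x0 : GL x0 (fun uv : X * X => [:: uv.2; uv.1]) 2.
Proof.
split=> // -[|[|i]] /=; [exact: measurable_snd|exact: measurable_fst|].
exact: measurable_cst.
Qed.

Lemma iint_swap_le x0 m pre (F G : seq X -> \bar R) :
  (forall s, 0 <= F s) -> (forall s, 0 <= G s) ->
  (forall u v r, F (pre ++ u :: v :: r) <= G (pre ++ v :: u :: r)) ->
  (forall d'' (Y' : measurableType d'') (Q' : Y' -> seq X),
     GL x0 Q' m.+2 -> measurable_fun setT (fun y => G (pre ++ Q' y))) ->
  iint p m.+2 (fun s => F (pre ++ s)) <= iint p m.+2 (fun s => G (pre ++ s)).
Proof.
move=> F0 G0 FG HG /=.
pose f := fun uv : X * X => iint p m (fun s => G (pre ++ uv.2 :: uv.1 :: s)).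
have mf : measurable_fun setT f.
  have := @iint_meas x0 m _ (X * X)%type (fun uv => [:: uv.2; uv.1]) 2
    (fun L => G (pre ++ L)) (fun s => G0 _) (GL_pair x0).
  by apply => d'' Y' Q'; rewrite add2n; apply: HG.
have f0 uv : 0 <= f uv by apply: iint_ge0.
apply: (@le_trans _ _ (\int[p]_x \int[p]_y f (x, y))).
  apply: le_int_nn => u; first by apply: integral_ge0 => v _; apply: iint_ge0.
  apply: le_int_nn => v; first by apply: iint_ge0.
  by apply: iint_le => // s.
by rewrite (fubini_tonelli f mf f0).
Qed.

End IINT.
Section GP.
Context {R : realType} {d : measure_display} {X : measurableType d}.
Variables (k : X -> X -> R) (s2 : R).

Definition Gm n (P : nat -> X) : 'M[R]_n := \matrix_(i, j) k (P i) (P j).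
Definition Km n P : 'M[R]_n := Gm n P + s2%:M.
Definition bv n (P : nat -> X) v : 'cV[R]_n := \col_i k (P i) v.
Definition pcn n P u v :=
  k u v - ((bv n P u)^T *m invmx (Km n P) *m bv n P v) 0 0.

Lemma post_covE x0 (L : seq X) n u v : size L = n ->
  post_cov s2 k L u v = pcn n (nth x0 L) u v.
Proof.
move=> <-; rewrite /post_cov /pcn /Km /Gm /bv.
have -> : gram k L = \matrix_(i, j) k (nth x0 L i) (nth x0 L j).
  by apply/matrixP => i j; rewrite !mxE !(tnth_nth x0).
have E w : kvec k L w = \col_i k (nth x0 L i) w.
  by apply/matrixP => i j; rewrite !mxE !(tnth_nth x0).
by rewrite !E.
Qed.

Lemma dpp_weightE x0 S x1 (xs : seq X) m : size xs = m ->
  dpp_weight s2 k S x1 xs = \det (1%:M + s2^-1 *: \matrix_(i, j < m)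
      post_cov s2 k (rcons S x1) (nth x0 xs i) (nth x0 xs j)).
Proof.
move=> <-; rewrite /dpp_weight; congr (\det (_ + _ *: _)).
by apply/matrixP => i j; rewrite !mxE !(tnth_nth x0).
Qed.

Hypothesis mk : measurable_fun setT (fun xy : X * X => k xy.1 xy.2).

Context {d' : measure_display} {Y : measurableType d'}.

Lemma meas_k (a b : Y -> X) : measurable_fun setT a -> measurable_fun setT b ->
  measurable_fun setT (fun y => k (a y) (b y)).
Proof.
move=> ma mb; exact: (measurableT_comp mk (measurable_fun_pair ma mb)).
Qed.

Lemma meas_pc x0 (A : Y -> seq X) n (u v : Y -> X) : GL x0 A n ->
  measurable_fun setT u -> measurable_fun setT v ->
  measurable_fun setT (fun y => post_cov s2 k (A y) (u y) (v y)).
Proof.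
case=> sA mA mu mv.
under eq_fun do rewrite (post_covE x0 _ _ _ _ (sA _)).
apply: measurable_funB; first exact: meas_k.
have hb w : measurable_fun setT w -> mmx (fun y => bv n (nth x0 (A y)) (w y)).
  by move=> mw; apply: mmx_fun => i j; exact: meas_k.
have hK : mmx (fun y => invmx (Km n (nth x0 (A y)))).
  apply: mmx_inv; apply: mmx_add; last exact: mmx_cst.
  by apply: mmx_fun => i j; exact: meas_k.
have := mmx_mul _ _ (mmx_mul _ _ (mmx_tr _ (hb _ mu)) hK) (hb _ mv).
by move=> /(_ 0 0).
Qed.

Lemma meas_dw x0 S x1 (L : Y -> seq X) m : GL x0 L m ->
  measurable_fun setT (fun y => dpp_weight s2 k S x1 (L y)).
Proof.
move=> [sL mL]; under eq_fun do rewrite (dpp_weightE x0 _ _ _ _ (sL _)).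
apply: meas_det; apply: mmx_add; first exact: mmx_cst.
apply: mmx_scale; apply: mmx_fun => i j.
apply: (meas_pc x0 (fun _ => rcons S x1) _ _ _ (GL_const x0 _)); exact: mL.
Qed.

End GP.
Section GPLA.
Context {R : realType} {d : measure_display} {X : measurableType d}.
Variables (k : X -> X -> R) (s2 : R).
Hypothesis hsym : forall x y, k x y = k y x.
Hypothesis hpsd : forall (n : nat) (xs : 'I_n -> X) (c : 'cV[R]_n),
      0 <= (c^T *m (\matrix_(i, j) k (xs i) (xs j)) *m c) 0 0.
Hypothesis hs2 : 0 < s2.

Lemma Gm_psd n P (c : 'cV_n) : 0 <= (c^T *m Gm k n P *m c) 0 0.
Proof. exact: (hpsd n (fun i : 'I_n => P i) c). Qed.

Lemma Km_quad n P (c : 'cV_n) : (c^T *m Km k s2 n P *m c) 0 0 =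
  (c^T *m Gm k n P *m c) 0 0 + s2 * (c^T *m c) 0 0.
Proof.
rewrite /Km mulmxDr mul_mx_scalar mulmxDl -scalemxAl.
by rewrite [LHS]mxE [X in _ + X = _]mxE.
Qed.

Lemma Km_psd n P (c : 'cV_n) : 0 <= (c^T *m Km k s2 n P *m c) 0 0.
Proof.
rewrite Km_quad; apply: addr_ge0; first exact: Gm_psd.
apply: mulr_ge0; [exact: ltW|exact: sumsq_ge0].
Qed.

Lemma Km_unit n P : Km k s2 n P \in unitmx.
Proof.
apply: (@pd_unit _ _ _ _ hs2) => c; rewrite Km_quad lerDr; exact: Gm_psd.
Qed.

Lemma Km_sym n P : (Km k s2 n P)^T = Km k s2 n P.
Proof.
rewrite /Km linearD /= tr_scalar_mx; congr (_ + _).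
by apply/matrixP => i j; rewrite !mxE hsym.
Qed.


Lemma pcn_var n P v (c : 'cV_n) :
  pcn k s2 n P v v <= k v v - 2 * (c^T *m bv k n P v) 0 0
                      + (c^T *m Km k s2 n P *m c) 0 0.
Proof.
set K := Km k s2 n P; set b := bv k n P v; set a := invmx K *m b.
have Ka : K *m a = b by rewrite /a mulmxA mulmxV ?mul1mx //; exact: Km_unit.
have aK : a^T *m K = b^T.
  by rewrite -[K in _ *m K]Km_sym -trmx_mul Ka.
have := Km_psd n P (c - a); rewrite -/K.
rewrite [(c - a)^T]linearB /= !mulmxBl !mulmxBr aK -[c^T *m K *m a]mulmxA Ka.
have ->: b^T *m c = (c^T *m b)^T by rewrite trmx_mul trmxK.
rewrite /pcn -/K -/b -[b^T *m invmx K *m b]mulmxA -/a.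
rewrite !mxE_sub trmx11.
lra.
Qed.

Lemma pcn_opt n P v : exists c : 'cV_n,
  pcn k s2 n P v v = k v v - 2 * (c^T *m bv k n P v) 0 0
                      + (c^T *m Km k s2 n P *m c) 0 0.
Proof.
set K := Km k s2 n P; set b := bv k n P v; exists (invmx K *m b).
set a := invmx K *m b.
have Ka : K *m a = b by rewrite /a mulmxA mulmxV ?mul1mx //; exact: Km_unit.
rewrite -mulmxA Ka /pcn -/K -/b -[b^T *m invmx K *m b]mulmxA -/a.
have ->: b^T *m a = (a^T *m b)^T by rewrite trmx_mul trmxK.
rewrite trmx11; lra.
Qed.
Lemma qfE n (A : 'M[R]_n) (c : 'cV_n) :
  (c^T *m A *m c) 0 0 = \sum_i \sum_j c i 0 * A i j * c j 0.
Proof.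
rewrite mxE; under eq_bigr do rewrite mxE big_distrl /=.
rewrite exchange_big; apply: eq_bigr => i _; apply: eq_bigr => j _.
by rewrite mxE.
Qed.

Definition Vq n (P : nat -> X) v (g : nat -> R) :=
  k v v - 2 * \sum_(i < n) g i * k (P i) v
  + \sum_(i < n) \sum_(j < n) g i * (k (P i) (P j) + s2 *+ (i == j)) * g j.

Lemma Vq_mx n P v (g : nat -> R) :
  k v v - 2 * ((\col_(i < n) g i)^T *m bv k n P v) 0 0
  + ((\col_(i < n) g i)^T *m Km k s2 n P *m (\col_(i < n) g i)) 0 0
  = Vq n P v g.
Proof.
rewrite qfE /Vq; congr (_ - 2 * _ + _).
  by rewrite mxE; apply: eq_bigr => i _; rewrite !mxE.
by apply: eq_bigr => i _; apply: eq_bigr => j _; rewrite !mxE.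
Qed.

Lemma Vq_ext n P P' v (g : nat -> R) :
  (forall i, (i < n)%N -> P' i = P i) ->
  Vq n.+1 P' v (fun i => if (i < n)%N then g i else 0) = Vq n P v g.
Proof.
move=> hP; rewrite /Vq big_ord_recr /= ltnn mul0r addr0.
rewrite big_ord_recr /= ltnn [X in _ + (_ + X)]big1 => [|j _]; last by rewrite !mul0r.
rewrite addr0.
congr (_ - 2 * _ + _).
  by apply: eq_bigr => i _; rewrite /= ltn_ord hP.
apply: eq_bigr => i _; rewrite big_ord_recr /= ltnn mulr0 addr0.
apply: eq_bigr => j _; rewrite /= !ltn_ord !hP //.
Qed.

Lemma pcn_mono n P P' v : (forall i, (i < n)%N -> P' i = P i) ->
  pcn k s2 n.+1 P' v v <= pcn k s2 n P v v.
Proof.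
move=> hP; have [c ->] := pcn_opt n P v.
pose g i := \sum_(j < n | val j == i) c j 0.
have cg : c = \col_(i < n) g i.
  by apply/matrixP => i j; rewrite (ord1 j) mxE /g (big_pred1 i) // => l /=; rewrite val_eqE.
rewrite cg Vq_mx -(Vq_ext _ _ _ _ g hP) -Vq_mx.
exact: pcn_var.
Qed.

Lemma post_cov_mono (L : seq X) u v :
  post_cov s2 k (rcons L u) v v <= post_cov s2 k L v v.
Proof.
rewrite (post_covE k s2 v (rcons L u) (size L).+1 v v (size_rcons _ _)).
rewrite (post_covE k s2 v L (size L) v v erefl).
by apply: pcn_mono => i hi; rewrite nth_rcons hi.
Qed.

Lemma post_psd n P m (Q : nat -> X) (c : 'cV_m) :
  0 <= (c^T *m (\matrix_(i, j) pcn k s2 n P (Q i) (Q j)) *m c) 0 0.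
Proof.
pose Bm : 'M[R]_(n, m) := \matrix_(l, i) k (P l) (Q i).
pose Kx : 'M[R]_m := \matrix_(i, j) k (Q i) (Q j).
set K := Km k s2 n P.
have eM : \matrix_(i, j) pcn k s2 n P (Q i) (Q j) = Kx - Bm^T *m invmx K *m Bm.
  apply/matrixP => i j; rewrite mxE mxE_sub /pcn [Kx i j]mxE; congr (_ - _).
  by rewrite !mxE; apply: eq_bigr => l _; rewrite !mxE; congr (_ * _);
     apply: eq_bigr => l' _; rewrite !mxE.
set b := Bm *m c; set a := invmx K *m b.
have Ka : K *m a = b by rewrite /a mulmxA mulmxV ?mul1mx //; exact: Km_unit.
have aK : a^T *m K = b^T.
  by rewrite -[K in _ *m K]Km_sym -trmx_mul Ka.
pose J : 'I_(n + m) -> X := fun i => match fintype.split i with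
  | inl l => P l | inr j => Q j end.
have eJ : \matrix_(i, j) k (J i) (J j) = block_mx (Gm k n P) Bm Bm^T Kx.
  apply/matrixP => i j; rewrite mxE.
  rewrite -(splitK i) -(splitK j) /J !unsplitK.
  case: (fintype.split i) => i'; case: (fintype.split j) => j' /=;
    by rewrite ?block_mxEul ?block_mxEur ?block_mxEdl ?block_mxEdr !mxE.
have := hpsd (n + m) J (col_mx (- a) c); rewrite eJ.
rewrite tr_col_mx mul_row_block mul_row_col [(- a)^T]linearN /= !mulNmx.
rewrite !mulmxDl !mulNmx !mulmxN !mxE_add !mxE_opp.
have eb : c^T *m Bm^T = b^T by rewrite -trmx_mul.
rewrite eb -[a^T *m Bm *m c]mulmxA -/b.
have ea : (a^T *m b) 0 0 = (b^T *m a) 0 0.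
  by rewrite -trmx11 trmx_mul trmxK.
rewrite ea.
have hq := Km_quad n P a; rewrite -/K aK in hq.
have hs : 0 <= s2 * (a^T *m a) 0 0.
  by apply: mulr_ge0; [exact: ltW|exact: sumsq_ge0].
have -> : c^T *m \matrix_(i, j) pcn k s2 n P (Q i) (Q j) *m c
    = c^T *m Kx *m c - b^T *m a.
  rewrite eM mulmxBr mulmxBl; congr (_ - _).
  by rewrite !mulmxA eb -!mulmxA.
rewrite mxE_sub.
lra.
Qed.
End GPLA.

Section FIN.
Context {R : realType} {d : measure_display} {X : measurableType d}.
Variables (k : X -> X -> R) (s2 : R).
Hypothesis hsym : forall x y, k x y = k y x.
Hypothesis hpsd : forall (n : nat) (xs : 'I_n -> X) (c : 'cV[R]_n),
      0 <= (c^T *m (\matrix_(i, j) k (xs i) (xs j)) *m c) 0 0.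
Hypothesis hs2 : 0 < s2.

Lemma dw_ge0 S x1 xs : 0 <= dpp_weight s2 k S x1 xs.
Proof.
rewrite (dpp_weightE k s2 x1 S x1 xs (size xs) erefl).
set n := size (rcons S x1).
have -> : \matrix_(i, j < size xs)
     post_cov s2 k (rcons S x1) (nth x1 xs i) (nth x1 xs j)
   = \matrix_(i, j) pcn k s2 n (nth x1 (rcons S x1)) (nth x1 xs i) (nth x1 xs j).
  by apply/matrixP => i j; rewrite !mxE (post_covE k s2 x1 _ n _ _ erefl).
apply: det_psd_ge0 => c; rewrite -scalemxAr -scalemxAl mxE_scale.
apply: mulr_ge0; first by rewrite invr_ge0 ltW.
by apply: post_psd.
Qed.

Lemma dw_swap S x1 pre u v r :
  dpp_weight s2 k S x1 (pre ++ u :: v :: r) =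
  dpp_weight s2 k S x1 (pre ++ v :: u :: r).
Proof.
set l1 := pre ++ u :: v :: r; set l2 := pre ++ v :: u :: r.
have s12 : size l2 = size l1 by rewrite !size_cat.
set m := size l1.
rewrite (dpp_weightE k s2 x1 S x1 l1 m erefl) (dpp_weightE k s2 x1 S x1 l2 m s12).
have h0 : (size pre < m)%N by rewrite /m /l1 size_cat /=; lia.
have h1 : ((size pre).+1 < m)%N by rewrite /m /l1 size_cat /=; lia.
pose s : {perm 'I_m} := tperm (Ordinal h0) (Ordinal h1).
have hQ : forall i : 'I_m, nth x1 l2 i = nth x1 l1 (s i).
  move=> i; rewrite /s; case: tpermP => [->|->|ne1 ne2] /=.
  - by rewrite /l1 /l2 !nth_cat ltnn subnn ltnNge leqnSn /= subSnn.
  - by rewrite /l1 /l2 !nth_cat ltnn subnn ltnNge leqnSn /= subSnn.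
  - rewrite /l1 /l2 !nth_cat; case: ltnP => // h.
    case e: (i - size pre)%N => [|[|t]] //.
    + by case: ne1; apply: val_inj => /=; lia.
    + by case: ne2; apply: val_inj => /=; lia.
set W1 := 1%:M + _; set W2 := 1%:M + _.
suff -> : W2 = row_perm s (col_perm s W1).
  rewrite row_permE col_permE !det_mulmx !det_perm odd_permV.
  by rewrite mulrCA -expr2 sqrr_sign mulr1.
by apply/matrixP => i j; rewrite !mxE (inj_eq perm_inj) !hQ.
Qed.

End FIN.

Local Close Scope classical_set_scope.
Theorem lemma7 (R : realType) (d : measure_display) (X : measurableType d)
    (k : X -> X -> R) (s2 : R) (B T t : nat) (S : seq X)
    (p : probability X R) (b : nat) :
  (forall x y, k x y = k y x) ->
  (forall (n : nat) (xs : 'I_n -> X) (c : 'cV[R]_n),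
      0 <= (c^T *m (\matrix_(i, j) k (xs i) (xs j)) *m c) 0 0) ->
  measurable_fun setT (fun xy : X * X => k xy.1 xy.2) ->
  0 < s2 ->
  (3 <= B)%N -> (1 <= t <= T)%N -> size S = (t.-1 * B)%N ->
  (forall x1, (iint p B.-1 (fun xs => (dpp_weight s2 k S x1 xs)%:E) < +oo)%E) ->
  (3 <= b <= B)%N ->
  (round_exp p s2 k B S (sd_tb s2 k S b)
     <= round_exp p s2 k B S (sd_tb s2 k S b.-1))%E.
Proof.
move=> hsym hpsd mk hs2 hB _ _ _ /andP[hb3 hbB].
have F0 g x1 xs : (0 <= g x1 xs)%R ->
    (0 <= (dpp_weight s2 k S x1 xs * g x1 xs)%:E)%E.
  by move=> hg; rewrite lee_fin mulr_ge0 // dw_ge0.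
have sd0 c x1 xs : (0 <= sd_tb s2 k S c x1 xs)%R by rewrite /sd_tb /post_sd sqrtr_ge0.
rewrite /round_exp; apply: le_int_nn => x1.
  apply: mule_ge0; first by apply: iint_ge0 => s; exact: F0.
  rewrite lee_fin invr_ge0 fine_ge0 //; apply: iint_ge0 => s.
  by rewrite lee_fin dw_ge0.
apply: lee_wpmul2r.
  rewrite lee_fin invr_ge0 fine_ge0 //; apply: iint_ge0 => s.
  by rewrite lee_fin dw_ge0.
have eB : B.-1 = ((b - 3) + (B - b).+2)%N by lia.
rewrite eB; apply: iint_prefix => [s|pre hpre]; first exact: F0.
apply: (iint_swap_le p x1 (B - b) pre
  (fun xs => (dpp_weight s2 k S x1 xs * sd_tb s2 k S b x1 xs)%:E)
  (fun xs => (dpp_weight s2 k S x1 xs * sd_tb s2 k S b.-1 x1 xs)%:E)) => [s|s|u v r|d'' Y' Q' HQ]; [exact: F0|exact: F0| |].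
  rewrite lee_fin (dw_swap _ _ hs2).
  have hw := dw_ge0 _ _ hsym hpsd hs2 S x1 (pre ++ [:: v, u & r]).
  have hs := sd0 b x1 (pre ++ [:: u, v & r]).
  apply: (ler_pM hw hs (lexx _)).
  have e1 : b.-1 = (size pre).+2 by lia.
  have e2 : b.-1.-1 = (size pre).+1 by lia.
  rewrite /sd_tb e2 e1 /= take_cat ltnNge leqnSn /= subSnn /= take_size_cat //.
  rewrite !nth_cat ltnn ltnNge leqnSn /= subnn subSnn /=.
  rewrite /post_sd; apply: ler_wsqrtr.
  have -> : S ++ x1 :: pre ++ [:: u] = rcons (S ++ x1 :: pre) u.
    by rewrite rcons_cat /= cats1.
  exact: post_cov_mono.
apply/measurable_EFinP; apply: measurable_funM.
  have HL := GL_cat x1 _ _ _ _ (GL_const x1 pre) HQ.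
  exact: (meas_dw k s2 mk x1 S x1 _ _ HL).
rewrite /sd_tb /post_sd; apply: meas_sqrt.
have HL1 : GL x1 (fun y => x1 :: (pre ++ Q' y)) _ :=
  GL_cat x1 _ _ _ _ (GL_const x1 [:: x1]) (GL_cat x1 _ _ _ _ (GL_const x1 pre) HQ).
have HA := GL_cat x1 _ _ _ _ (GL_const x1 S) (GL_take x1 b.-1.-1 _ _ HL1).
apply: (meas_pc k s2 mk x1 _ _ _ _ HA); exact: HL1.2.
Qed.
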